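(* Let $\beta,\delta\in(0,1)$, $K>0$, $d_1,d_2>0$, and let $\eta_1,\eta_2\ge0$ be constants. Consider $$\frac{df}{dt}=\tfrac12 fm\beta L-\delta f-\eta_1\frac{f}{f+d_1},\qquad \frac{dm}{dt}=\tfrac12 fm\beta L-\delta m-\eta_2\frac{m}{m+d_2},\qquad L=1-\frac{f+m}{K}.$$ If $\beta K<2\delta+\frac{\eta_1}{K+d_1}+\frac{\eta_2}{K+d_2}$, then the trivial equilibrium $(0,0)$ is globally asymptotically stable.
   Context: $f,m$ are female and male densities, with populations considered in the region $0\le f,m$, $f+m\le K$. The model uses saturating harvesting of both females and males. *)

(* Defs.v *)
From Stdlib Require Import Reals.
From Coquelicot Require Import Coquelicot.
Open Scope R_scope.

Definition Lfun (K f m : R) : R := 1 - (f + m) / K.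

Definition rhs_f (beta delta K d1 eta1 : R) (f m : R) : R :=
  / 2 * f * m * beta * Lfun K f m - delta * f - eta1 * (f / (f + d1)).

Definition rhs_m (beta delta K d2 eta2 : R) (f m : R) : R :=
  / 2 * f * m * beta * Lfun K f m - delta * m - eta2 * (m / (m + d2)).

Definition in_region (K f m : R) : Prop := 0 <= f /\ 0 <= m /\ f + m <= K.

Definition is_solution (beta delta K d1 d2 eta1 eta2 : R) (f m : R -> R) : Prop :=
  filterlim f (at_right 0) (locally (f 0)) /\
  filterlim m (at_right 0) (locally (m 0)) /\
  (forall t, 0 < t ->
     is_derive f t (rhs_f beta delta K d1 eta1 (f t) (m t)) /\
     is_derive m t (rhs_m beta delta K d2 eta2 (f t) (m t))).

Definition GAS_origin (beta delta K d1 d2 eta1 eta2 : R) : Prop :=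
  (forall eps, 0 < eps -> exists del, 0 < del /\
     forall f m : R -> R,
       is_solution beta delta K d1 d2 eta1 eta2 f m ->
       in_region K (f 0) (m 0) ->
       sqrt (f 0 ^ 2 + m 0 ^ 2) < del ->
       forall t, 0 <= t -> sqrt (f t ^ 2 + m t ^ 2) < eps) /\
  (forall f m : R -> R,
     is_solution beta delta K d1 d2 eta1 eta2 f m ->
     in_region K (f 0) (m 0) ->
     is_lim f p_infty 0 /\ is_lim m p_infty 0).

(* Main.v *)
Require Import Defs.
From Stdlib Require Import Reals Lra.
From Coquelicot Require Import Coquelicot.
Open Scope R_scope.

Definition RC (p : R -> R) (t : R) : Prop :=
  forall eps, 0 < eps -> exists d, 0 < d /\ forall u, t < u < t + d -> Rabs (p u - p t) < eps.

Lemma ball_R (x e y : R) : ball x e y <-> Rabs (y - x) < e.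
Proof. reflexivity. Qed.

Lemma filterlim_RC p t : filterlim p (at_right t) (locally (p t)) -> RC p t.
Proof.
  intros H eps Heps. destruct (proj1 (filterlim_locally _ _) H (mkposreal eps Heps)) as [d Hd].
  exists d. split. apply cond_pos. intros u Hu. apply (Hd u).
  apply ball_R. rewrite Rabs_right; simpl; lra. lra.
Qed.

Lemma cont_eps p t : continuous p t -> forall eps, 0 < eps -> exists d, 0 < d /\
  forall u, Rabs (u - t) < d -> Rabs (p u - p t) < eps.
Proof.
  intros H eps Heps. destruct (proj1 (filterlim_locally _ _) H (mkposreal eps Heps)) as [d Hd].
  exists d. split. apply cond_pos. intros u Hu. apply (Hd u). apply ball_R. exact Hu.
Qed.

Lemma cont_RC p t : continuous p t -> RC p t.
Proof.
  intros H eps Heps. destruct (cont_eps p t H eps Heps) as [d [Hd H2]].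
  exists d. split. exact Hd. intros u Hu. apply H2. rewrite Rabs_right; lra.
Qed.

Lemma derive_cont (p : R -> R) (t l : R) : is_derive p t l -> continuous p t.
Proof. intros H. apply (@ex_derive_continuous R_AbsRing R_NormedModule p t). exists l. exact H. Qed.

Lemma mono_nonincr g dg a b : 0 < a -> a <= b ->
  (forall x, a <= x <= b -> is_derive g x (dg x)) ->
  (forall x, a <= x <= b -> dg x <= 0) -> g b <= g a.
Proof.
  intros Ha Hab Hd Hs.
  destruct (Req_dec a b) as [->|Hne]. lra.
  destruct (MVT_gen g a b dg) as [c [Hc Heq]].
  - intros x Hx. rewrite Rmin_left in Hx by lra. rewrite Rmax_right in Hx by lra. apply Hd. lra.
  - intros x Hx. rewrite Rmin_left in Hx by lra. rewrite Rmax_right in Hx by lra.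
    apply continuity_pt_filterlim. eapply derive_cont. apply Hd. lra.
  - rewrite Rmin_left in Hc by lra. rewrite Rmax_right in Hc by lra.
    assert (dg c <= 0) by (apply Hs; lra). nra.
Qed.
Lemma exit_lemma (p : R -> R) t1 : (forall t, 0 < t -> continuous p t) -> p 0 <= 0 ->
  0 <= t1 -> 0 < p t1 ->
  exists t0, 0 <= t0 < t1 /\ p t0 <= 0 /\ forall t, t0 < t <= t1 -> 0 < p t.
Proof.
  intros Hc H0 Ht1 Hp1.
  set (E := fun t => 0 <= t <= t1 /\ p t <= 0).
  destruct (completeness E) as [t0 [Hub Hlub]].
  - exists t1. intros x [Hx _]. lra.
  - exists 0. split; [lra|exact H0].
  - assert (Ht0 : 0 <= t0 <= t1).
    { split. apply Hub. split; [lra|exact H0]. apply Hlub. intros x [Hx _]. lra. }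
    assert (Hafter : forall t, t0 < t <= t1 -> 0 < p t).
    { intros t Ht. destruct (Rle_lt_dec (p t) 0) as [Hle|Hlt]; [|exact Hlt].
      assert (t <= t0) by (apply Hub; split; [lra|exact Hle]). lra. }
    assert (Hpt0 : p t0 <= 0).
    { destruct (Rle_lt_dec (p t0) 0) as [Hle|Hlt]; [exact Hle|].
      destruct (Req_dec t0 0) as [Heq|Hne]. { rewrite Heq in Hlt. lra. }
      destruct (cont_eps p t0 (Hc t0 ltac:(lra)) (p t0) Hlt) as [d [Hd Hd2]].
      assert (Hb : is_upper_bound E (t0 - d)).
      { intros x [Hx Hpx]. destruct (Rle_lt_dec x (t0 - d)) as [?|Hgt]; [lra|].
        assert (x <= t0) by (apply Hub; split; assumption).
        assert (Rabs (p x - p t0) < p t0) by (apply Hd2; rewrite Rabs_left1; lra).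
        apply Rabs_def2 in H1. lra. }
      apply Hlub in Hb. lra. }
    exists t0. split; [|split; assumption].
    split. lra. destruct (Req_dec t0 t1) as [->|]; lra.
Qed.

Lemma stay_below (p dp : R -> R) :
  (forall t, 0 < t -> is_derive p t (dp t)) -> RC p 0 -> p 0 <= 0 ->
  (forall t, 0 < t -> 0 < p t -> dp t <= 0) -> forall t, 0 <= t -> p t <= 0.
Proof.
  intros Hd HR0 H0 Hneg t1 Ht1.
  destruct (Rle_lt_dec (p t1) 0) as [?|Hp1]; [assumption|exfalso].
  assert (Hc : forall t, 0 < t -> continuous p t) by (intros t Ht; eapply derive_cont; apply Hd; exact Ht).
  destruct (exit_lemma p t1 Hc H0 Ht1 Hp1) as [t0 [Ht0 [Hpt0 Haft]]].
  assert (HR : RC p t0).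
  { destruct (Req_dec t0 0) as [->|Hne]. exact HR0. apply cont_RC, Hc. lra. }
  destruct (HR (p t1) Hp1) as [d [Hdp Hd2]].
  set (s := t0 + Rmin d (t1 - t0) / 2).
  assert (Hs1 : t0 < s < t1).
  { unfold s. assert (0 < Rmin d (t1 - t0)) by (apply Rmin_glb_lt; lra).
    assert (Rmin d (t1 - t0) <= t1 - t0) by apply Rmin_r. lra. }
  assert (Hs2 : s < t0 + d).
  { unfold s. assert (0 < Rmin d (t1 - t0)) by (apply Rmin_glb_lt; lra).
    assert (Rmin d (t1 - t0) <= d) by apply Rmin_l. lra. }
  assert (Hps : Rabs (p s - p t0) < p t1) by (apply Hd2; lra).
  apply Rabs_def2 in Hps.
  assert (p t1 <= p s).
  { apply (mono_nonincr p dp s t1). lra. lra.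
    intros x Hx. apply Hd. lra.
    intros x Hx. apply Hneg. lra. apply Haft. lra. }
  lra.
Qed.

Lemma exp_le1 y : y <= 0 -> exp y <= 1.
Proof. intros H. destruct (Req_dec y 0) as [->|Hn]. rewrite exp_0; lra.
  rewrite <- exp_0. left. apply exp_increasing. lra. Qed.

Lemma bound_prod (y L A B b : R) : 0 <= b -> Rabs y <= A -> Rabs L <= B -> b * (y * L) <= b * (A * B).
Proof.
  intros Hb Hy HL. apply Rmult_le_compat_l; [exact Hb|].
  apply Rle_trans with (Rabs (y * L)). apply Rle_abs. rewrite Rabs_mult.
  apply Rmult_le_compat; try apply Rabs_pos; assumption.
Qed.

Lemma pos_gen (beta delta K d eta : R) (x y : R -> R) :
  0 < d -> 0 <= eta -> 0 < K -> 0 <= beta -> 0 <= delta ->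
  (forall t, 0 <= t -> RC x t) -> (forall t, 0 <= t -> RC y t) ->
  (forall t, 0 < t -> is_derive x t
     (x t * (/ 2 * y t * beta * (1 - (x t + y t) / K) - delta - eta * / (x t + d)))) ->
  0 <= x 0 -> forall t, 0 <= t -> 0 <= x t.
Proof.
  intros Hd Heta HK Hbeta Hdelta HRx HRy Hder Hx0 t1 Ht1.
  set (c := fun u => / 2 * y u * beta * (1 - (x u + y u) / K) - delta - eta * / (x u + d)).
  destruct (Rle_lt_dec 0 (x t1)) as [?|Hneg]; [assumption|exfalso].
  assert (Hc : forall t, 0 < t -> continuous (fun u => - x u) t).
  { intros t Ht. eapply derive_cont. apply (is_derive_opp x). apply Hder. exact Ht. }
  destruct (exit_lemma (fun u => - x u) t1 Hc ltac:(lra) Ht1 ltac:(lra)) as [t0 [Ht0 [Hpt0 Haft]]].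
  simpl in Hpt0.
  assert (Hd2 : 0 < Rmin 1 (d / 2)) by (apply Rmin_glb_lt; lra).
  destruct (HRx t0 ltac:(lra) _ Hd2) as [dx [Hdx Hxx]].
  destruct (HRy t0 ltac:(lra) 1 ltac:(lra)) as [dy [Hdy Hyy]].
  set (eps := Rmin (Rmin dx dy) (t1 - t0)).
  assert (Heps : 0 < eps) by (apply Rmin_glb_lt; [apply Rmin_glb_lt|]; lra).
  assert (He1 : eps <= dx) by (unfold eps; eapply Rle_trans; [apply Rmin_l|apply Rmin_l]).
  assert (He2 : eps <= dy) by (unfold eps; eapply Rle_trans; [apply Rmin_l|apply Rmin_r]).
  assert (He3 : eps <= t1 - t0) by (unfold eps; apply Rmin_r).
  set (A := Rabs (y t0) + 1).
  set (B := 1 + (Rabs (x t0) + Rabs (y t0) + 2) / K).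
  set (M := beta / 2 * (A * B)).
  assert (HA : 0 <= A) by (unfold A; pose proof (Rabs_pos (y t0)); lra).
  assert (HB : 0 <= B).
  { unfold B. pose proof (Rabs_pos (y t0)). pose proof (Rabs_pos (x t0)).
    assert (0 <= (Rabs (x t0) + Rabs (y t0) + 2) / K) by (apply Rdiv_le_0_compat; lra). lra. }
  assert (HM : 0 <= M) by (unfold M; apply Rmult_le_pos; [lra|apply Rmult_le_pos; assumption]).
  assert (Hbound : forall u, t0 < u < t0 + eps -> c u <= M).
  { intros u Hu.
    assert (H1 : Rabs (x u - x t0) < Rmin 1 (d / 2)) by (apply Hxx; lra).
    assert (H2 : Rabs (y u - y t0) < 1) by (apply Hyy; lra).
    pose proof (Rmin_l 1 (d/2)). pose proof (Rmin_r 1 (d/2)).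
    apply Rabs_def2 in H1. apply Rabs_def2 in H2.
    assert (Hxd : 0 < x u + d) by lra.
    assert (Hh : 0 <= eta * / (x u + d)) by (apply Rmult_le_pos; [lra| left; apply Rinv_0_lt_compat; lra]).
    assert (Hya : Rabs (y u) <= A) by (unfold A; unfold Rabs in *; repeat destruct Rcase_abs; lra).
    set (S := Rabs (x t0) + Rabs (y t0) + 2).
    assert (HS1 : x u + y u <= S) by (unfold S; unfold Rabs in *; repeat destruct Rcase_abs; lra).
    assert (HS2 : - S <= x u + y u) by (unfold S; unfold Rabs in *; repeat destruct Rcase_abs; lra).
    assert (HiK : 0 < / K) by (apply Rinv_0_lt_compat; lra).
    assert (Hz1 : (x u + y u) / K <= S / K) by (apply Rmult_le_compat_r; lra).
    assert (Hz2 : - S / K <= (x u + y u) / K) by (apply Rmult_le_compat_r; lra).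
    assert (HL : Rabs (1 - (x u + y u) / K) <= B).
    { unfold B. fold S. clearbody S. clear -Hz1 Hz2. revert Hz1 Hz2. generalize ((x u + y u) / K). intros z Hz1 Hz2. replace (- S / K) with (- (S / K)) in Hz2 by (unfold Rdiv; ring). unfold Rabs; destruct Rcase_abs; lra. }
    pose proof (bound_prod (y u) (1 - (x u + y u) / K) A B (beta / 2) ltac:(lra) Hya HL).
    unfold c, M. replace (/ 2 * y u * beta * (1 - (x u + y u) / K)) with (beta / 2 * (y u * (1 - (x u + y u) / K))) by (unfold Rdiv; ring). lra. }
  set (t2 := t0 + eps / 2).
  assert (Ht2 : t0 < t2 < t1) by (unfold t2; lra).
  set (e := fun u => exp (- M * (u - t0))).
  set (g := fun u => x u * e u).
  assert (Hxt2 : x t2 < 0) by (pose proof (Haft t2 ltac:(lra)); simpl in *; lra).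
  assert (Hkap : 0 < - g t2) by (unfold g; pose proof (exp_pos (- M * (t2 - t0))); unfold e; nra).
  destruct (HRx t0 ltac:(lra) _ Hkap) as [d3 [Hd3 Hx3]].
  set (s := t0 + Rmin d3 (eps / 2) / 2).
  assert (Hm0 : 0 < Rmin d3 (eps / 2)) by (apply Rmin_glb_lt; lra).
  pose proof (Rmin_l d3 (eps/2)). pose proof (Rmin_r d3 (eps/2)).
  assert (Hs : t0 < s < t2) by (unfold s, t2; lra).
  assert (Hxs : Rabs (x s - x t0) < - g t2) by (apply Hx3; unfold s; lra).
  apply Rabs_def2 in Hxs.
  assert (Hde : forall u, is_derive e u (- M * e u)).
  { intros u. unfold e. auto_derive. auto. rewrite Rmult_1_r. reflexivity. }
  assert (Hgs : - g t2 <= - g s).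
  { apply (mono_nonincr (fun u => - g u) (fun u => - (x u * c u * e u + x u * (- M * e u))) s t2).
    lra. lra.
    - intros u Hu. apply (is_derive_opp (fun u => g u)). unfold g.
      apply (is_derive_mult x e). apply Hder. lra. apply Hde. intros; apply Rmult_comm.
    - intros u Hu. assert (Hcu : c u <= M) by (apply Hbound; unfold t2 in *; lra).
      assert (Hxu : x u < 0) by (pose proof (Haft u ltac:(lra)); simpl in *; lra).
      pose proof (exp_pos (- M * (u - t0))). fold (e u) in H1.
      assert (0 <= - x u * e u) by nra. nra. }
  assert (Hes : e s <= 1) by (unfold e; apply exp_le1; nra).
  assert (Hxs0 : x s < 0) by (pose proof (Haft s ltac:(lra)); simpl in *; lra).
  assert (Hxe : x s <= x s * e s) by nra.
  unfold g in *. simpl in Hpt0. lra.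
Qed.

Lemma quad_bound (K m : R) : 0 < K -> m * (1 - m / K) <= K / 4.
Proof.
  intros HK. assert (E : m * (1 - m / K) = K / 4 - (K / 2 - m) ^ 2 / K) by (field; lra).
  rewrite E. assert (0 <= (K / 2 - m) ^ 2 / K) by (apply Rdiv_le_0_compat; [apply pow2_ge_0|lra]). lra.
Qed.

Lemma harv_bound (eta d K f : R) : 0 <= eta -> 0 < d -> 0 <= f -> f <= K ->
  eta / (K + d) * f <= eta * (f / (f + d)).
Proof.
  intros He Hd Hf HfK.
  assert (E : eta * (f / (f + d)) - eta / (K + d) * f = eta * f * (K - f) / ((f + d) * (K + d))) by (field; lra).
  assert (0 <= eta * f * (K - f) / ((f + d) * (K + d))).
  { apply Rdiv_le_0_compat. apply Rmult_le_pos; [apply Rmult_le_pos|]; lra. nra. }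
  lra.
Qed.

Definition rate (beta delta K d1 d2 eta1 eta2 : R) : R :=
  let p := delta + eta1 / (K + d1) in let q := delta + eta2 / (K + d2) in
  delta * (p + q - beta * K / 4) / (p + q).

Lemma rate_pos beta delta K d1 d2 eta1 eta2 :
  0 < beta < 1 -> 0 < delta < 1 -> 0 < K -> 0 < d1 -> 0 < d2 ->
  0 <= eta1 -> 0 <= eta2 ->
  beta * K < 2 * delta + eta1 / (K + d1) + eta2 / (K + d2) ->
  0 < rate beta delta K d1 d2 eta1 eta2.
Proof.
  intros Hb Hd HK Hd1 Hd2 He1 He2 Hc. unfold rate.
  assert (0 <= eta1 / (K + d1)) by (apply Rdiv_le_0_compat; lra).
  assert (0 <= eta2 / (K + d2)) by (apply Rdiv_le_0_compat; lra).
  apply Rdiv_lt_0_compat. apply Rmult_lt_0_compat; nra. lra.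
Qed.

Lemma deriv_bound beta delta K d1 d2 eta1 eta2 f m :
  0 < beta < 1 -> 0 < delta < 1 -> 0 < K -> 0 < d1 -> 0 < d2 ->
  0 <= eta1 -> 0 <= eta2 ->
  beta * K < 2 * delta + eta1 / (K + d1) + eta2 / (K + d2) ->
  0 <= f -> 0 <= m -> f + m <= K ->
  rhs_f beta delta K d1 eta1 f m + rhs_m beta delta K d2 eta2 f m <=
  - rate beta delta K d1 d2 eta1 eta2 * (f + m).
Proof.
  intros Hb Hd HK Hd1 Hd2 He1 He2 Hc Hf Hm HfmK.
  unfold rate, rhs_f, rhs_m, Lfun. cbv zeta.
  set (a := eta1 / (K + d1)). set (b := eta2 / (K + d2)).
  assert (Ha : 0 <= a) by (apply Rdiv_le_0_compat; lra).
  assert (Hb' : 0 <= b) by (apply Rdiv_le_0_compat; lra).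
  pose proof (harv_bound eta1 d1 K f He1 Hd1 Hf ltac:(lra)) as H1.
  pose proof (harv_bound eta2 d2 K m He2 Hd2 Hm ltac:(lra)) as H2.
  fold a in H1. fold b in H2.
  set (X := beta * f * m * (1 - (f + m) / K)).
  set (B := beta * K / 4).
  assert (EX : / 2 * f * m * beta * (1 - (f + m) / K) + / 2 * f * m * beta * (1 - (f + m) / K) = X)
    by (unfold X; field; lra).
  assert (HXf : X <= B * f).
  { unfold X, B. pose proof (quad_bound K m HK).
    assert (f * m * (1 - (f + m) / K) <= f * (m * (1 - m / K))).
    { assert (E : f * (m * (1 - m / K)) - f * m * (1 - (f + m) / K) = f * f * m / K) by (field; lra).
      assert (0 <= f * f * m / K) by (apply Rdiv_le_0_compat; [apply Rmult_le_pos; [nra|lra]|lra]). lra. }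
    assert (f * (m * (1 - m / K)) <= f * (K / 4)) by (apply Rmult_le_compat_l; lra).
    replace (beta * f * m * (1 - (f + m) / K)) with (beta * (f * m * (1 - (f + m) / K))) by ring.
    replace (beta * K / 4 * f) with (beta * (f * (K / 4))) by field. apply Rmult_le_compat_l; lra. }
  assert (HXm : X <= B * m).
  { unfold X, B. pose proof (quad_bound K f HK).
    assert (f * m * (1 - (f + m) / K) <= m * (f * (1 - f / K))).
    { assert (E : m * (f * (1 - f / K)) - f * m * (1 - (f + m) / K) = f * m * m / K) by (field; lra).
      assert (0 <= f * m * m / K) by (apply Rdiv_le_0_compat; [apply Rmult_le_pos; [nra|lra]|lra]). lra. }
    assert (m * (f * (1 - f / K)) <= m * (K / 4)) by (apply Rmult_le_compat_l; lra).
    replace (beta * f * m * (1 - (f + m) / K)) with (beta * (f * m * (1 - (f + m) / K))) by ring.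
    replace (beta * K / 4 * m) with (beta * (m * (K / 4))) by field. apply Rmult_le_compat_l; lra. }
  set (p := delta + a). set (q := delta + b).
  assert (Hpq : 0 < p + q) by (unfold p, q; lra).
  assert (HbK : 0 < beta * K) by nra.
  assert (HB : B < p + q). { unfold B, p, q, a, b. lra. }
  assert (Key : (p + q) * (X - p * f - q * m) <= delta * (B - p - q) * (f + m)).
  { assert (p * X <= p * (B * f)) by (apply Rmult_le_compat_l; unfold p; lra).
    assert (q * X <= q * (B * m)) by (apply Rmult_le_compat_l; unfold q; lra).
    assert (Hp : delta <= p) by (unfold p; lra). assert (Hq : delta <= q) by (unfold q; lra).
    assert ((p - delta) * (B - p - q) * f <= 0).
    { apply Rmult_le_0_r; [|lra]. apply Rmult_le_0_l; lra. }
    assert ((q - delta) * (B - p - q) * m <= 0).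
    { apply Rmult_le_0_r; [|lra]. apply Rmult_le_0_l; lra. }
    nra. }
  assert (Key2 : X - p * f - q * m <= - (delta * (p + q - B) / (p + q)) * (f + m)).
  { apply (Rmult_le_reg_l (p + q)). exact Hpq.
    replace ((p + q) * (- (delta * (p + q - B) / (p + q)) * (f + m))) with (delta * (B - p - q) * (f + m)) by (field; lra).
    exact Key. }
  replace (/ 2 * f * m * beta * (1 - (f + m) / K) - delta * f - eta1 * (f / (f + d1)) +
  (/ 2 * f * m * beta * (1 - (f + m) / K) - delta * m - eta2 * (m / (m + d2)))) with
  (X - delta * f - delta * m - eta1 * (f / (f + d1)) - eta2 * (m / (m + d2))) by (rewrite <- EX; ring).
  unfold p, q in *. clearbody X a b B. lra.
Qed.

Lemma deriv_eq (f : R -> R) (t a b : R) : is_derive f t a -> @eq R a b -> is_derive f t b.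
Proof. intros H ->. exact H. Qed.

Lemma RC_sumC (f m : R -> R) t C : RC f t -> RC m t -> RC (fun u => f u + m u - C) t.
Proof.
  intros Hf Hm eps He.
  destruct (Hf (eps/2) ltac:(lra)) as [d1 [Hd1 H1]]. destruct (Hm (eps/2) ltac:(lra)) as [d2 [Hd2 H2]].
  exists (Rmin d1 d2). split. apply Rmin_glb_lt; lra.
  intros u Hu. pose proof (Rmin_l d1 d2). pose proof (Rmin_r d1 d2).
  assert (A1 : Rabs (f u - f t) < eps/2) by (apply H1; lra).
  assert (A2 : Rabs (m u - m t) < eps/2) by (apply H2; lra).
  replace (f u + m u - C - (f t + m t - C)) with ((f u - f t) + (m u - m t)) by ring.
  eapply Rle_lt_trans. apply Rabs_triang. lra.
Qed.

Lemma deriv_sumC (f m : R -> R) t a b C : is_derive f t a -> is_derive m t b ->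
  is_derive (fun u => f u + m u - C) t (a + b).
Proof.
  intros Ha Hb.
  pose proof (is_derive_minus _ _ t _ _ (is_derive_plus _ _ t _ _ Ha Hb) (is_derive_const C t)) as H.
  eapply is_derive_ext; [|eapply deriv_eq; [exact H|]].
  intros u. simpl. unfold minus, plus, opp; simpl. ring.
  unfold minus, plus, opp, zero; simpl. ring.
Qed.

Lemma sol_props beta delta K d1 d2 eta1 eta2 (f m : R -> R) :
  0 < beta < 1 -> 0 < delta < 1 -> 0 < K -> 0 < d1 -> 0 < d2 ->
  0 <= eta1 -> 0 <= eta2 ->
  beta * K < 2 * delta + eta1 / (K + d1) + eta2 / (K + d2) ->
  is_solution beta delta K d1 d2 eta1 eta2 f m -> in_region K (f 0) (m 0) ->
  (forall t, 0 <= t -> 0 <= f t /\ 0 <= m t /\ f t + m t <= f 0 + m 0) /\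
  (forall t, 1 <= t -> f t + m t <= K * exp (rate beta delta K d1 d2 eta1 eta2 * (1 - t))).
Proof.
  intros Hb Hd HK Hd1 Hd2 He1 He2 Hc [Hf0 [Hm0 Hder]] [Hr1 [Hr2 Hr3]].
  set (c := rate beta delta K d1 d2 eta1 eta2).
  assert (Hcpos : 0 < c) by (apply rate_pos; assumption).
  assert (HRf : forall t, 0 <= t -> RC f t).
  { intros t Ht. destruct (Req_dec t 0) as [->|Hn]. apply filterlim_RC; exact Hf0.
    apply cont_RC. eapply derive_cont. apply (proj1 (Hder t ltac:(lra))). }
  assert (HRm : forall t, 0 <= t -> RC m t).
  { intros t Ht. destruct (Req_dec t 0) as [->|Hn]. apply filterlim_RC; exact Hm0.
    apply cont_RC. eapply derive_cont. apply (proj2 (Hder t ltac:(lra))). }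
  assert (Hfpos : forall t, 0 <= t -> 0 <= f t).
  { apply (pos_gen beta delta K d1 eta1 f m); try lra; try assumption.
    intros t Ht. eapply deriv_eq. apply (proj1 (Hder t Ht)).
    unfold rhs_f, Lfun. unfold Rdiv. ring. }
  assert (Hmpos : forall t, 0 <= t -> 0 <= m t).
  { apply (pos_gen beta delta K d2 eta2 m f); try lra; try assumption.
    intros t Ht. eapply deriv_eq. apply (proj2 (Hder t Ht)).
    unfold rhs_m, Lfun. unfold Rdiv. ring. }
  assert (HdV : forall C t, 0 < t -> is_derive (fun u => f u + m u - C) t
      (rhs_f beta delta K d1 eta1 (f t) (m t) + rhs_m beta delta K d2 eta2 (f t) (m t))).
  { intros C t Ht. apply deriv_sumC; [apply (proj1 (Hder t Ht))|apply (proj2 (Hder t Ht))]. }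
  assert (HK' : forall t, 0 <= t -> f t + m t - K <= 0).
  { apply (stay_below _ (fun t => rhs_f beta delta K d1 eta1 (f t) (m t) + rhs_m beta delta K d2 eta2 (f t) (m t))).
    intros t Ht. apply HdV. exact Ht.
    apply RC_sumC; [apply HRf|apply HRm]; lra.
    lra.
    intros t Ht Hp. pose proof (Hfpos t ltac:(lra)). pose proof (Hmpos t ltac:(lra)).
    unfold rhs_f, rhs_m, Lfun.
    assert (HL : 1 - (f t + m t) / K < 0).
    { assert (1 < (f t + m t) / K). { apply (Rmult_lt_reg_r K). lra. unfold Rdiv. rewrite Rmult_assoc, Rinv_l by lra. lra. } lra. }
    assert (0 <= / 2 * f t * m t * beta) by (apply Rmult_le_pos; [|lra]; apply Rmult_le_pos; [apply Rmult_le_pos|]; lra).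
    assert (/ 2 * f t * m t * beta * (1 - (f t + m t) / K) <= 0) by nra.
    assert (0 <= eta1 * (f t / (f t + d1))) by (apply Rmult_le_pos; [lra|apply Rdiv_le_0_compat; lra]).
    assert (0 <= eta2 * (m t / (m t + d2))) by (apply Rmult_le_pos; [lra|apply Rdiv_le_0_compat; lra]).
    nra. }
  assert (Hdb : forall t, 0 < t -> rhs_f beta delta K d1 eta1 (f t) (m t) + rhs_m beta delta K d2 eta2 (f t) (m t) <= - c * (f t + m t)).
  { intros t Ht. apply deriv_bound; try assumption. apply Hfpos; lra. apply Hmpos; lra. pose proof (HK' t ltac:(lra)); lra. }
  split.
  - intros t Ht. split; [apply Hfpos; exact Ht|]. split; [apply Hmpos; exact Ht|].
    cut (f t + m t - (f 0 + m 0) <= 0). lra.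
    apply (stay_below (fun u => f u + m u - (f 0 + m 0)) (fun t => rhs_f beta delta K d1 eta1 (f t) (m t) + rhs_m beta delta K d2 eta2 (f t) (m t))); try assumption.
    intros s Hs. apply HdV. exact Hs.
    apply RC_sumC; [apply HRf|apply HRm]; lra.
    lra.
    intros s Hs _. pose proof (Hdb s Hs). pose proof (Hfpos s ltac:(lra)). pose proof (Hmpos s ltac:(lra)). nra.
  - intros t Ht.
    assert (HW : (f t + m t) * exp (c * t) <= (f 1 + m 1) * exp (c * 1)).
    { apply (mono_nonincr (fun u => (f u + m u) * exp (c * u))
        (fun u => (rhs_f beta delta K d1 eta1 (f u) (m u) + rhs_m beta delta K d2 eta2 (f u) (m u)) * exp (c * u)
                  + (f u + m u) * (c * exp (c * u))) 1 t); try lra.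
      + intros u Hu.
        assert (He : is_derive (fun u => exp (c * u)) u (c * exp (c * u))).
        { auto_derive. auto. ring. }
        assert (HV : is_derive (fun u => f u + m u - 0) u (rhs_f beta delta K d1 eta1 (f u) (m u) + rhs_m beta delta K d2 eta2 (f u) (m u))) by (apply HdV; lra).
        pose proof (is_derive_mult _ _ u _ _ HV He (fun a b => Rmult_comm a b)) as HM.
        eapply is_derive_ext; [|eapply deriv_eq; [exact HM|]].
        intros v. simpl. unfold mult; simpl. ring.
        unfold mult, plus; simpl. ring.
      + intros u Hu. pose proof (Hdb u ltac:(lra)). pose proof (exp_pos (c * u)). nra. }
    assert (H1K : f 1 + m 1 <= K) by (pose proof (HK' 1 ltac:(lra)); lra).
    assert (Hpos1 : 0 <= f t + m t) by (pose proof (Hfpos t ltac:(lra)); pose proof (Hmpos t ltac:(lra)); lra).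
    apply (Rmult_le_reg_r (exp (c * t))). apply exp_pos.
    rewrite Rmult_assoc, <- exp_plus. replace (c * (1 - t) + c * t) with (c * 1) by ring.
    pose proof (exp_pos (c * 1)). nra.
Qed.

Lemma tail_bound (K c eps : R) (g : R -> R) : 0 < K -> 0 < c -> 0 < eps ->
  (forall x, 1 <= x -> 0 <= g x <= K * exp (c * (1 - x))) ->
  exists T, forall x, T < x -> Rabs (g x - 0) < eps.
Proof.
  intros HK Hc He Hg. set (L := ln (eps / K)).
  exists (1 + Rabs L / c). intros x Hx.
  assert (HL0 : 0 <= Rabs L / c) by (apply Rdiv_le_0_compat; [apply Rabs_pos|lra]).
  assert (Hx1 : 1 <= x) by lra.
  assert (H1 : c * (x - 1) > Rabs L).
  { assert (c * (Rabs L / c) = Rabs L) by (field; lra).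
    assert (c * (Rabs L / c) < c * (x - 1)) by (apply Rmult_lt_compat_l; lra). lra. }
  assert (H2 : c * (1 - x) < L) by (pose proof (Rle_abs (- L)); rewrite Rabs_Ropp in *; lra).
  assert (H3 : exp (c * (1 - x)) < eps / K).
  { rewrite <- (exp_ln (eps / K)) by (apply Rdiv_lt_0_compat; lra). apply exp_increasing. exact H2. }
  assert (H4 : K * exp (c * (1 - x)) < eps).
  { assert (K * (eps / K) = eps) by (field; lra).
    assert (K * exp (c * (1 - x)) < K * (eps / K)) by (apply Rmult_lt_compat_l; lra). lra. }
  destruct (Hg x Hx1). rewrite Rminus_0_r, Rabs_right by lra. lra.
Qed.

Theorem mainTheorem16 (beta delta K d1 d2 eta1 eta2 : R) :
  0 < beta < 1 -> 0 < delta < 1 -> 0 < K -> 0 < d1 -> 0 < d2 ->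
  0 <= eta1 -> 0 <= eta2 ->
  beta * K < 2 * delta + eta1 / (K + d1) + eta2 / (K + d2) ->
  GAS_origin beta delta K d1 d2 eta1 eta2.
Proof.
  intros Hb Hd HK Hd1 Hd2 He1 He2 Hc. split.
  - intros eps Heps. exists (eps / 2). split. lra. intros f m Hs Hr Hsq t Ht.
    destruct (sol_props beta delta K d1 d2 eta1 eta2 f m Hb Hd HK Hd1 Hd2 He1 He2 Hc Hs Hr) as [P1 _].
    destruct (P1 t Ht) as [Hf [Hm HV]].
    destruct Hr as [Hf0 [Hm0 _]].
    assert (A1 : sqrt (f t ^ 2 + m t ^ 2) <= f t + m t).
    { rewrite <- (sqrt_pow2 (f t + m t)) by lra. apply sqrt_le_1_alt. nra. }
    assert (A2 : f 0 <= sqrt (f 0 ^ 2 + m 0 ^ 2)).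
    { rewrite <- (sqrt_pow2 (f 0) Hf0) at 1. apply sqrt_le_1_alt. nra. }
    assert (A3 : m 0 <= sqrt (f 0 ^ 2 + m 0 ^ 2)).
    { rewrite <- (sqrt_pow2 (m 0) Hm0) at 1. apply sqrt_le_1_alt. nra. }
    lra.
  - intros f m Hs Hr.
    destruct (sol_props beta delta K d1 d2 eta1 eta2 f m Hb Hd HK Hd1 Hd2 He1 He2 Hc Hs Hr) as [P1 P2].
    pose proof (rate_pos beta delta K d1 d2 eta1 eta2 Hb Hd HK Hd1 Hd2 He1 He2 Hc) as Hcp.
    split; apply is_lim_spec; intros eps; simpl.
    + apply (tail_bound K _ eps f HK Hcp (cond_pos eps)).
      intros x Hx. destruct (P1 x ltac:(lra)) as [? [? _]]. pose proof (P2 x Hx). lra.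
    + apply (tail_bound K _ eps m HK Hcp (cond_pos eps)).
      intros x Hx. destruct (P1 x ltac:(lra)) as [? [? _]]. pose proof (P2 x Hx). lra.
Qed.
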